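(* Let $C$ be a binary linear $[n,k',d]$ code that contains its dual ($C^\perp\subseteq C$), and let the $[[n,k,d]]$ CSS code with $k=2k'-n$ be constructed from it. Then for every integer $c$ with $0\le c\le \frac{n-k}{2}=n-k'$ there is an $[[n-c,k,d;c]]_{AB}$ EAQEC code obtained from this CSS code by assigning $c$ of its qubits to Bob (deleting the corresponding columns of the $X$- and $Z$-parts of its check matrix).
   Context: CSS construction: if $C$ is a binary $[n,k',d]$ code with $C^\perp\subseteq C$ and parity check matrix $P$ (of size $(n-k')\times n$), the stabilizer group generated by the $X$-type operators $X^{r}$ and the $Z$-type operators $Z^{r}$ for the rows $r$ of $P$ defines an $[[n,2k'-n,d]]$ stabilizer code. Its check matrix can be brought to the standard form $\left[\begin{array}{cc|cc} A & I_{s\times s} & 0 & 0\\ 0&0&B& I_{(n-k-s)\times(n-k-s)}\end{array}\right]$. Pauli operators are considered up to phase; weight is the number of non-identity tensor factors. An $[[n',k,d;c]]$ entanglement-assisted (EAQEC) code: Alice and Bob share $c$ Bell pairs; Alice encodes $k$ qubits into $n'$ qubits (including her halves of the ebits). It is specified by a simplified stabilizer group $\mathcal S'$ on Alice's $n'$ qubits generated by $g'_1,h'_1,\dots,g'_c,h'_c,g'_{c+1},\dots,g'_{n'-k-c}$ with $g'_i,h'_i$ anticommuting for $i\le c$ and all other pairs commuting; the encoded state on all $n'+c$ qubits is stabilized by $g'_i\otimes Z_i$, $h'_i\otimes X_i$ ($i\le c$, acting on Bob's $i$-th qubit) and $g'_j\otimes I$ ($j>c$). Removing the columns of the last $c$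 qubits from a standard stabilizer code's check matrix whose corresponding generators are paired as $g'_i\otimes Z_i$, $h'_i\otimes X_i$ gives such a simplified group. The subscript $AB$ means the stabilizer group on all $n'+c$ qubits is that of a standard $[[n'+c,k,d]]$ stabilizer code, so the code corrects errors of weight up to $\lfloor (d-1)/2\rfloor$ on Alice's and Bob's qubits together. *)

(* Defs.v *)
From HB Require Import structures.
From mathcomp Require Import all_boot all_order all_algebra.
Set Implicit Arguments. Unset Strict Implicit. Unset Printing Implicit Defensive.
Import GRing.Theory.
Local Open Scope ring_scope.

Notation bvec n := 'rV['F_2]_n.

Definition hwt n (v : bvec n) : nat := #|[set i : 'I_n | v 0 i != 0]|.

Definition in_code m n (P : 'M['F_2]_(m, n)) (v : bvec n) : bool :=
  v *m P^T == 0.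

Definition min_dist m n (P : 'M['F_2]_(m, n)) (d : nat) : Prop :=
  (exists2 v : bvec n, in_code P v & (v != 0) && (hwt v == d)) /\
  (forall v : bvec n, in_code P v -> v != 0 -> (d <= hwt v)%N).

(* Pauli operators on n qubits, up to phase: (x | z) in F_2^(n+n);
   X-part = lsubmx, Z-part = rsubmx *)
Notation pauli n := 'rV['F_2]_(n + n).

Definition xpart n (v : pauli n) : bvec n := lsubmx v.
Definition zpart n (v : pauli n) : bvec n := rsubmx v.

(* weight = number of non-identity tensor factors *)
Definition pwt n (v : pauli n) : nat :=
  #|[set i : 'I_n | (xpart v 0 i != 0) || (zpart v 0 i != 0)]|.

(* symplectic product restricted to the qubits in A
   (0 = commute, 1 = anticommute, for the operators restricted to A,
    i.e. after deleting the columns of the qubits outside A) *)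
Definition sympl_on n (A : {set 'I_n}) (u v : pauli n) : 'F_2 :=
  \sum_(j in A) (xpart u 0 j * zpart v 0 j + zpart u 0 j * xpart v 0 j).

Definition sympl n (u v : pauli n) : 'F_2 := sympl_on [set: 'I_n] u v.

Definition css_check m n (P : 'M['F_2]_(m, n)) : 'M['F_2]_(m + m, n + n) :=
  block_mx P 0 0 P.

(* the stabilizer group with check matrix M (rows = generators) defines a
   standard [[n,k,d]] stabilizer code: the group is abelian, it has n-k
   independent generators, and every element of the normalizer N(S) outside S
   has weight at least d *)
Definition stab_code (n k d : nat) m (M : 'M['F_2]_(m, n + n)) : Prop :=
  [/\ (k <= n)%N,
      forall i j, sympl (row i M) (row j M) = 0,
      \rank M = (n - k)%N &
      forall v : pauli n, (forall i, sympl v (row i M) = 0) ->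
        ~~ (v <= M)%MS -> (d <= pwt v)%N].
Arguments stab_code n k d {m} M.

(* [[n - c, k, d; c]]_AB entanglement-assisted code obtained from the standard
   stabilizer code with check matrix M by assigning the c qubits
   bob 0, ..., bob (c-1) to Bob: generators g_i = g'_i (x) Z_i, h_i = h'_i (x) X_i
   (i < c) and f_l = f'_l (x) I (l < n-k-2c) generate the same group as M,
   are independent, and the simplified group (columns of Bob's qubits deleted)
   has the pairing structure g'_i, h'_i anticommuting, all other pairs commuting. *)
Definition EAQEC_AB_from (n k d c : nat) m (M : 'M['F_2]_(m, n + n)) : Prop :=
  exists bob : 'I_c -> 'I_n, injective bob /\
  let B := [set bob j | j : 'I_c] in
  let A := ~: B in
  exists (g h : 'I_c -> pauli n) (f : 'I_(n - k - 2 * c) -> pauli n),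
  let G := col_mx (\matrix_i g i) (col_mx (\matrix_i h i) (\matrix_l f l)) in
  [/\ stab_code n k d M,
      (G :=: M)%MS /\ row_free G,
      [/\ forall i j, xpart (g i) 0 (bob j) = 0 /\
                   zpart (g i) 0 (bob j) = (i == j)%:R,
          forall i j, xpart (h i) 0 (bob j) = (i == j)%:R /\
                   zpart (h i) 0 (bob j) = 0 &
          forall l j, xpart (f l) 0 (bob j) = 0 /\ zpart (f l) 0 (bob j) = 0] &
      [/\ forall i j, sympl_on A (g i) (h j) = (i == j)%:R,
          forall i j, sympl_on A (g i) (g j) = 0,
          forall i j, sympl_on A (h i) (h j) = 0,
          forall l i, sympl_on A (f l) (g i) = 0 /\ sympl_on A (f l) (h i) = 0 &
          forall l l', sympl_on A (f l) (f l') = 0]].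
Arguments EAQEC_AB_from n k d c {m} M.

(* Main.v *)
Require Import Defs.
From HB Require Import structures.
From mathcomp Require Import all_boot all_order all_algebra.
From mathcomp Require Import zify.
Set Implicit Arguments. Unset Strict Implicit.
Import GRing.Theory.
Local Open Scope ring_scope.

Lemma pivots r n (P : 'M['F_2]_(r, n)) : row_free P -> P *m P^T = 0 ->
  exists (p : 'I_r -> 'I_n) (S : 'M['F_2]_r) (Q : 'M['F_2]_(r, n)),
   [/\ injective p, P = S *m Q, Q *m Q^T = 0 & forall i j, Q i (p j) = (i == j)%:R].
Proof.
move=> fP PP.
have fT : row_full P^T by rewrite /row_full mxrank_tr; exact: fP.
set f := fullrankfun fT.
pose S := (rowsub f P^T)^T.
have uS : S \in unitmx by rewrite unitmx_tr; exact: fullrowsub_unit.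
exists f, S, (invmx S *m P); split.
- exact: fullrankfun_inj.
- by rewrite mulmxA mulmxV // mul1mx.
- by rewrite trmx_mul mulmxA -(mulmxA _ P) PP mulmx0 mul0mx.
move=> i j.
have := congr1 (fun M : 'M['F_2]_r => M i j) (mulVmx uS).
rewrite !mxE => <-; apply: eq_bigr => k _; rewrite !mxE //.
Qed.

Definition dotA n (A : {set 'I_n}) (x y : bvec n) : 'F_2 :=
  \sum_(j in A) x 0 j * y 0 j.

Lemma F2_opp (x : 'F_2) : - x = x.
Proof. apply/val_inj; case: x => -[|[|m]] Hm //. Qed.

Lemma sympl_onE n A (a b a' b' : bvec n) :
  sympl_on A (row_mx a b) (row_mx a' b') = dotA A a b' + dotA A b a'.
Proof.
by rewrite /sympl_on /xpart /zpart !row_mxKl !row_mxKr big_split.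
Qed.

Lemma dotA0l n A (y : bvec n) : dotA A 0 y = 0.
Proof. by apply: big1 => j _; rewrite mxE mul0r. Qed.
Lemma dotA0r n A (y : bvec n) : dotA A y 0 = 0.
Proof. by apply: big1 => j _; rewrite mxE mulr0. Qed.

Lemma sympl_vec n (v w : pauli n) :
  sympl v w = (xpart v *m (zpart w)^T + zpart v *m (xpart w)^T) 0 0.
Proof.
rewrite /sympl /sympl_on !mxE -big_split /=.
apply: eq_big => [j|j _]; first by rewrite in_setT.
by rewrite !mxE.
Qed.

Lemma sympl_rows m n (M : 'M['F_2]_(m, n + n)) i j :
  sympl (row i M) (row j M) =
  (lsubmx M *m (rsubmx M)^T + rsubmx M *m (lsubmx M)^T) i j.
Proof.
rewrite /sympl /sympl_on !mxE -big_split /=.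
apply: eq_big => [k|k _]; first by rewrite in_setT.
by rewrite !mxE.
Qed.

Section Q.
Variables (r n c : nat) (Q : 'M['F_2]_(r, n)) (p : 'I_r -> 'I_n).
Hypotheses (pinj : injective p) (QQ : Q *m Q^T = 0)
  (Qp : forall i j, Q i (p j) = (i == j)%:R) (Hc : (c <= r)%N).

Definition bob (t : 'I_c) : 'I_n := p (widen_ord Hc t).
Lemma bob_inj : injective bob.
Proof. by move=> s t /pinj /(congr1 val) /= /val_inj. Qed.

Lemma dotQ (i1 i2 : 'I_r) :
  dotA (~: [set bob t | t : 'I_c]) (row i1 Q) (row i2 Q) =
    ((i1 == i2) && (i1 < c)%N)%:R.
Proof.
have full : \sum_j (row i1 Q) 0 j * (row i2 Q) 0 j = 0.
  transitivity ((Q *m Q^T) i1 i2); last by rewrite QQ mxE.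
  rewrite [RHS]mxE; apply: eq_bigr => k _; rewrite !mxE //.
rewrite /dotA.
have := full; rewrite (bigID (fun j => j \in ~: [set bob t | t : 'I_c])) /=.
move/eqP; rewrite addr_eq0 => /eqP ->; rewrite F2_opp.
under eq_bigl => j do rewrite in_setC negbK.
rewrite big_imset /=; last by move=> x y _ _; apply: bob_inj.
under eq_bigr => t _ do rewrite !mxE /bob !Qp.
case: (ltnP i1 c) => hi1.
  rewrite (bigD1 (Ordinal hi1)) //= big1 ?addr0.
    have -> : widen_ord Hc (Ordinal hi1) = i1 by apply/val_inj.
    by rewrite andbT eqxx mulr1n mul1r eq_sym.
  move=> t nt; have -> : (i1 == widen_ord Hc t) = false.
    apply/eqP => e; move/eqP: nt; apply; apply/val_inj; by rewrite /= e.
  by rewrite mul0r.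
rewrite andbF big1 // => t _.
have -> : (i1 == widen_ord Hc t) = false.
  apply/negbTE/eqP => e; move: (ltn_ord t); rewrite -[X in (X < _)%N]/(val (widen_ord Hc t)) -e.
  by rewrite ltnNge hi1.
by rewrite mul0r.
Qed.
End Q.

Lemma sub_colL m1 m2 n (A : 'M['F_2]_(m1, n)) (B : 'M['F_2]_(m2, n)) :
  (A <= col_mx A B)%MS.
Proof. by have := submx_refl (col_mx A B); rewrite col_mx_sub => /andP[]. Qed.
Lemma sub_colR m1 m2 n (A : 'M['F_2]_(m1, n)) (B : 'M['F_2]_(m2, n)) :
  (B <= col_mx A B)%MS.
Proof. by have := submx_refl (col_mx A B); rewrite col_mx_sub => /andP[]. Qed.

Section Constr.
Variables (r n c N : nat) (Q : 'M['F_2]_(r, n)) (p : 'I_r -> 'I_n).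
Hypotheses (pinj : injective p) (QQ : Q *m Q^T = 0)
  (Qp : forall i j, Q i (p j) = (i == j)%:R) (Hc : (c <= r)%N)
  (HN : N = ((r - c) + (r - c))%N).

Definition qn (m : nat) : bvec n :=
  if @insub _ (fun k => (k < r)%N) 'I_r m is Some i then row i Q else 0.

Lemma qn_ord m (hm : (m < r)%N) : qn m = row (Ordinal hm) Q.
Proof. by rewrite /qn (insubT (fun k => (k < r)%N) hm). Qed.

Local Notation bb := (bob p Hc).
Local Notation AA := (~: [set bb t | t : 'I_c]).

Lemma qn_bob m j : (m < r)%N -> qn m 0 (bb j) = (m == j)%:R.
Proof. by move=> hm; rewrite qn_ord mxE /bob Qp. Qed.

Lemma qn_dot m1 m2 : (m1 < r)%N -> (m2 < r)%N ->
  dotA AA (qn m1) (qn m2) = ((m1 == m2) && (m1 < c)%N)%:R.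
Proof. by move=> h1 h2; rewrite !qn_ord dotQ. Qed.

Definition gg (i : 'I_c) : pauli n := row_mx 0 (qn i).
Definition hh (i : 'I_c) : pauli n := row_mx (qn i) 0.
Definition ff (l : 'I_N) : pauli n :=
  if (l < r - c)%N then row_mx (qn (c + l)) 0 else row_mx 0 (qn (c + l - (r - c))).

Lemma ord_lt_r (i : 'I_c) : (i < r)%N.
Proof. exact: leq_trans (ltn_ord i) Hc. Qed.

Lemma ff_bounds (l : 'I_N) : ((l < r - c)%N -> (c + l < r)%N) /\ (c + l - (r - c) < r)%N.
Proof. have := ltn_ord l; move: (nat_of_ord l) => k; rewrite HN => hl; lia. Qed.

Lemma bob_conds :
  [/\ forall i j, xpart (gg i) 0 (bb j) = 0 /\ zpart (gg i) 0 (bb j) = (i == j)%:R,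
      forall i j, xpart (hh i) 0 (bb j) = (i == j)%:R /\ zpart (hh i) 0 (bb j) = 0 &
      forall l j, xpart (ff l) 0 (bb j) = 0 /\ zpart (ff l) 0 (bb j) = 0].
Proof.
split.
- move=> i j; rewrite /xpart /zpart /gg row_mxKl row_mxKr mxE qn_bob //.
  exact: ord_lt_r.
- move=> i j; rewrite /xpart /zpart /hh row_mxKl row_mxKr mxE qn_bob //.
  exact: ord_lt_r.
move=> l j; have [b1 b2] := ff_bounds l; have hj := ltn_ord j.
rewrite /xpart /zpart /ff; case: ifP => hl; rewrite row_mxKl row_mxKr !mxE.
  rewrite qn_bob; last exact: b1.
  by have -> : (c + l == j)%N = false by apply/negbTE; lia.
rewrite qn_bob //.
by have -> : (c + l - (r - c) == j)%N = false by apply/negbTE; lia.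
Qed.

Lemma sympl_conds :
 [/\ forall i j, sympl_on AA (gg i) (hh j) = (i == j)%:R,
     forall i j, sympl_on AA (gg i) (gg j) = 0,
     forall i j, sympl_on AA (hh i) (hh j) = 0,
     forall l i, sympl_on AA (ff l) (gg i) = 0 /\ sympl_on AA (ff l) (hh i) = 0 &
     forall l l', sympl_on AA (ff l) (ff l') = 0].
Proof.
split.
- move=> i j; rewrite /gg /hh sympl_onE dotA0l add0r qn_dot ?ord_lt_r //.
  by rewrite ltn_ord andbT.
- by move=> i j; rewrite /gg sympl_onE dotA0l dotA0r addr0.
- by move=> i j; rewrite /hh sympl_onE dotA0l dotA0r addr0.
- move=> l i; have [b1 b2] := ff_bounds l; have hi := ltn_ord i.
  have hl2 : (l < (r - c) + (r - c))%N by rewrite -HN.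
  rewrite /ff /gg /hh; case: ifP => hl; rewrite !sympl_onE ?dotA0l ?dotA0r ?add0r ?addr0; split => //.
  all: rewrite ?qn_dot ?ord_lt_r ?b1 //.
    have -> : (c + l < c)%N = false by apply/negbTE; lia.
  by rewrite andbF.
  have -> : (c + l - (r - c) < c)%N = false by apply/negbTE; lia.
  by rewrite andbF.
move=> l l'; have [b1 b2] := ff_bounds l; have [b1' b2'] := ff_bounds l'.
have hl2 : (l < (r - c) + (r - c))%N by rewrite -HN.
have hl2' : (l' < (r - c) + (r - c))%N by rewrite -HN.
rewrite /ff; case: ifP => hl; case: ifP => hl';
  rewrite !sympl_onE ?dotA0l ?dotA0r ?add0r ?addr0 //.
all: rewrite ?qn_dot ?b1 ?b1' //.
  have -> : (c + l < c)%N = false by apply/negbTE; lia.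
  by rewrite andbF.
have -> : (c + l - (r - c) < c)%N = false by apply/negbTE; lia.
  by rewrite andbF.
Qed.

Definition Gm : 'M['F_2]_(c + (c + N), n + n) :=
  col_mx (\matrix_i gg i) (col_mx (\matrix_i hh i) (\matrix_l ff l)).

Lemma gg_sub i : (gg i <= Gm)%MS.
Proof. rewrite -(rowK gg i); exact: submx_trans (row_sub _ _) (sub_colL _ _). Qed.
Lemma hh_sub i : (hh i <= Gm)%MS.
Proof.
rewrite -(rowK hh i); apply: submx_trans (row_sub _ _) _.
exact: submx_trans (sub_colL _ _) (sub_colR _ _).
Qed.
Lemma ff_sub l : (ff l <= Gm)%MS.
Proof.
rewrite -(rowK ff l); apply: submx_trans (row_sub _ _) _.
exact: submx_trans (sub_colR _ _) (sub_colR _ _).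
Qed.

Lemma qnE (i : 'I_r) : qn i = row i Q.
Proof. by rewrite (qn_ord (ltn_ord i)); congr row; apply: val_inj. Qed.

Lemma X_sub (i : 'I_r) : (row_mx (row i Q) 0 <= Gm)%MS.
Proof.
case: (ltnP i c) => hi.
  by have := hh_sub (Ordinal hi); rewrite /hh /= qnE.
have hl : (i - c < N)%N by rewrite HN; have := ltn_ord i; lia.
have := ff_sub (Ordinal hl); rewrite /ff /=.
have -> : (i - c < r - c)%N by have := ltn_ord i; lia.
by rewrite subnKC // qnE.
Qed.

Lemma Z_sub (i : 'I_r) : (row_mx 0 (row i Q) <= Gm)%MS.
Proof.
case: (ltnP i c) => hi.
  by have := gg_sub (Ordinal hi); rewrite /gg /= qnE.
have hl : ((r - c) + (i - c) < N)%N by rewrite HN; have := ltn_ord i; lia.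
have := ff_sub (Ordinal hl); rewrite /ff /=.
have -> : ((r - c) + (i - c) < r - c)%N = false by apply/negbTE; lia.
have -> : (c + (r - c + (i - c)) - (r - c) = i)%N by have := ltn_ord i; lia.
by rewrite qnE.
Qed.

Lemma M_sub (S : 'M['F_2]_r) : (css_check (S *m Q) <= Gm)%MS.
Proof.
rewrite /css_check block_mxEv col_mx_sub; apply/andP; split.
  rewrite -[0 : 'M_(r, n)](mulmx0 _ S) -mul_mx_row.
  apply: submx_trans (submxMl _ _) _; apply/row_subP => i.
  by rewrite row_row_mx row0 X_sub.
rewrite -[0 : 'M_(r, n)](mulmx0 _ S) -mul_mx_row.
apply: submx_trans (submxMl _ _) _; apply/row_subP => i.
by rewrite row_row_mx row0 Z_sub.
Qed.
End Constr.

Lemma xpartE n (a b : bvec n) : xpart (row_mx a b) = a.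
Proof. exact: row_mxKl. Qed.
Lemma zpartE n (a b : bvec n) : zpart (row_mx a b) = b.
Proof. exact: row_mxKr. Qed.

Lemma rank_css m n (P : 'M['F_2]_(m, n)) : row_free P ->
  \rank (css_check P) = (m + m)%N.
Proof. by move=> fP; rewrite /css_check rank_diag_block_mx (eqP fP). Qed.

Lemma two_r m n (P : 'M['F_2]_(m, n)) : row_free P -> P *m P^T = 0 -> (m + m <= n)%N.
Proof.
move=> fP PP; have := mxrank_mul_min P P^T.
rewrite PP mxrank0 mxrank_tr (eqP fP) leqn0 subn_eq0 //.
Qed.

Lemma stab_css n k' d (P : 'M['F_2]_(n - k', n)) :
  (k' <= n)%N -> row_free P -> min_dist P d -> P *m P^T = 0 ->
  stab_code n (2 * k' - n) d (css_check P).
Proof.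
move=> hk fP [_ md] PP.
have h2 := two_r fP PP.
split.
- lia.
- move=> i j; rewrite sympl_rows /css_check block_mxEh row_mxKl row_mxKr.
  rewrite !tr_col_mx !mul_col_mx !mul_mx_row !trmx0 !mulmx0 !mul0mx PP.
  by rewrite !row_mx0 !col_mx0 addr0 mxE.
- rewrite rank_css //; lia.
move=> v H nv.
set x := xpart v; set z := zpart v.
have key : forall w : pauli n, sympl v w = (x *m (zpart w)^T + z *m (xpart w)^T) 0 0.
  by move=> w; rewrite sympl_vec.
have cx : in_code P x.
  apply/eqP/matrixP => a i; rewrite (ord1 a) [RHS]mxE.
  have := H (rshift _ i); rewrite key /css_check block_mxEv rowKd row_row_mx row0.
  rewrite xpartE zpartE trmx0 mulmx0 addr0 => <-.
  by rewrite !mxE; apply: eq_bigr => k _; rewrite !mxE.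
have cz : in_code P z.
  apply/eqP/matrixP => a i; rewrite (ord1 a) [RHS]mxE.
  have := H (lshift _ i); rewrite key /css_check block_mxEv rowKu row_row_mx row0.
  rewrite xpartE zpartE trmx0 mulmx0 add0r => <-.
  by rewrite !mxE; apply: eq_bigr => k _; rewrite !mxE.
have [sx|nx] := boolP (x <= P)%MS; last first.
  have x0 : x != 0 by apply: contraNneq nx => ->; rewrite sub0mx.
  apply: leq_trans (md _ cx x0) _; apply: subset_leq_card.
  by apply/subsetP => i; rewrite !inE /x => ->.
have [sz|nz] := boolP (z <= P)%MS; last first.
  have z0 : z != 0 by apply: contraNneq nz => ->; rewrite sub0mx.
  apply: leq_trans (md _ cz z0) _; apply: subset_leq_card.
  by apply/subsetP => i; rewrite !inE /z => ->; rewrite orbT.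
exfalso; move/negP: nv; apply.
rewrite -(hsubmxK v) -/(xpart v) -/(zpart v) -/x -/z.
have -> : row_mx x z = row_mx x 0 + row_mx 0 z by rewrite add_row_mx addr0 add0r.
rewrite /css_check block_mxEv; apply: addmx_sub.
  case/submxP: sx => D ->; rewrite -[0 : 'M_(1, n)](mulmx0 _ D) -mul_mx_row.
  exact: submx_trans (submxMl _ _) (sub_colL _ _).
case/submxP: sz => D ->; rewrite -[0 : 'M_(1, n)](mulmx0 _ D) -mul_mx_row.
exact: submx_trans (submxMl _ _) (sub_colR _ _).
Qed.

Theorem theorem2 (n k' d : nat) (P : 'M['F_2]_(n - k', n)) :
  (k' <= n)%N ->
  row_free P ->                 (* P is a full-rank parity check matrix: dim C = k' *)
  min_dist P d ->               (* C has minimum distance d *)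
  P *m P^T = 0 ->               (* C^perp (row space of P) is contained in C *)
  forall c : nat, (c <= n - k')%N ->
    EAQEC_AB_from n (2 * k' - n) d c (css_check P).
Proof.
move=> hk fP md PP c Hc.
have h2 := two_r fP PP.
have [p [S [Q [pinj PSQ QQ Qp]]]] := pivots fP PP.
have HN : (n - (2 * k' - n) - 2 * c = (n - k' - c) + (n - k' - c))%N by lia.
exists (bob p Hc); split; first exact: bob_inj.
exists (gg (c:=c) Q), (hh (c:=c) Q), (ff c (N:=n - (2 * k' - n) - 2 * c) Q).
have st := stab_css hk fP md PP.
split => //.
- set G := col_mx _ _.
  have -> : G = Gm c (n - (2 * k' - n) - 2 * c) Q by [].
  have sMG : (css_check P <= Gm c (n - (2 * k' - n) - 2 * c) Q)%MS by rewrite PSQ; exact: M_sub.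
  have rM : \rank (css_check P) = (c + (c + (n - (2 * k' - n) - 2 * c)))%N.
    by rewrite rank_css //; lia.
  have rG : \rank (Gm c (n - (2 * k' - n) - 2 * c) Q) = (c + (c + (n - (2 * k' - n) - 2 * c)))%N.
    apply/eqP; rewrite eqn_leq rank_leq_row /= -{1}rM.
    exact: mxrank_leqif_sup sMG.
  split; last by rewrite /row_free rG.
  apply/eqmxP/andP; split; last exact: sMG.
  by rewrite -(geq_leqif (mxrank_leqif_sup sMG)) rG rM.
- exact: bob_conds.
- exact: sympl_conds.
Qed.
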